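(* Let $\mathcal{H}$ be a complex Hilbert space, let $A\in\mathcal{B}(\mathcal{H})$ be a nonzero positive operator, and let $\mathbb{A}=\begin{pmatrix}A&O\\O&A\end{pmatrix}$ on $\mathcal{H}\oplus\mathcal{H}$. Let $T,S\in\mathcal{B}_{A^{1/2}}(\mathcal{H})$. Then (i) $\omega_{\mathbb{A}}\left[\begin{pmatrix}T&S\\S&T\end{pmatrix}\right]=\max\{\omega_A(T+S),\omega_A(T-S)\}$; (ii) $\omega_{\mathbb{A}}\left[\begin{pmatrix}T&-S\\S&T\end{pmatrix}\right]=\max\{\omega_A(T+iS),\omega_A(T-iS)\}$.
   Context: For a positive operator $A$ on $\mathcal{H}$, $\langle x,y\rangle_A:=\langle Ax,y\rangle$ and $\|x\|_A:=\sqrt{\langle x,x\rangle_A}$. $\mathcal{B}_{A^{1/2}}(\mathcal{H})$ is the set of $T\in\mathcal{B}(\mathcal{H})$ such that $\|Tx\|_A\le\lambda\|x\|_A$ for some $\lambda>0$ and all $x\in\mathcal{H}$. For such $T$, $\omega_A(T):=\sup\{|\langle Tx,x\rangle_A|:x\in\mathcal{H},\|x\|_A=1\}$. $\omega_{\mathbb{A}}$ is defined the same way on $\mathcal{H}\oplus\mathcal{H}$ with the positive operator $\mathbb{A}$, i.e. $\langle (x_1,x_2),(y_1,y_2)\rangle_{\mathbb{A}}=\langle x_1,y_1\rangle_A+\langle x_2,y_2\rangle_A$. *)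

(* Defs.v *)
From HB Require Import structures.
From mathcomp Require Import all_boot all_order all_algebra.
From mathcomp Require Import all_classical reals.
From mathcomp Require Export complex.
Set Implicit Arguments. Unset Strict Implicit. Unset Printing Implicit Defensive.
Import Order.TTheory GRing.Theory Num.Theory.
Local Open Scope ring_scope.
Local Open Scope classical_set_scope.

Section Defs.
Variable R : realType.
Local Notation C := (R[i]).

Definition is_inner_product (V : lmodType C) (ip : V -> V -> C) : Prop :=
  [/\ forall (a : C) (x y z : V), ip (a *: x + y) z = a * ip x z + ip y z,
      forall x y : V, ip y x = (ip x y)^*,
      forall x : V, 0 <= ip x x &
      forall x : V, ip x x = 0 -> x = 0].

Definition ipnorm (W : Type) (ip : W -> W -> C) (x : W) : R :=
  Num.sqrt (complex.Re (ip x x)).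

Definition ip_complete (V : lmodType C) (ip : V -> V -> C) : Prop :=
  forall u : nat -> V,
    (forall e : R, 0 < e -> exists N, forall m n, (N <= m)%N -> (N <= n)%N ->
        ipnorm ip (u m - u n) < e) ->
    exists l : V, forall e : R, 0 < e -> exists N, forall n, (N <= n)%N ->
        ipnorm ip (u n - l) < e.

Definition bounded_op (V : lmodType C) (ip : V -> V -> C) (T : {linear V -> V}) :=
  exists c : R, forall x, ipnorm ip (T x) <= c * ipnorm ip x.

Definition positive_op (V : lmodType C) (ip : V -> V -> C) (A : {linear V -> V}) :=
  bounded_op ip A /\ forall x, 0 <= ip (A x) x.

Definition ipA (V : lmodType C) (ip : V -> V -> C) (A : V -> V) (x y : V) : C :=
  ip (A x) y.

Definition ipAA (V : lmodType C) (ip : V -> V -> C) (A : V -> V)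
  (x y : V * V) : C := ipA ip A x.1 y.1 + ipA ip A x.2 y.2.

Definition in_BA12 (V : lmodType C) (ip : V -> V -> C) (A : V -> V) (T : V -> V) :=
  exists2 l : R, 0 < l & forall x, ipnorm (ipA ip A) (T x) <= l * ipnorm (ipA ip A) x.

Definition omega (W : Type) (ipS : W -> W -> C) (T : W -> W) : R :=
  sup [set Normc.normc (ipS (T x) x) | x in [set x | ipnorm ipS x = 1]].

Definition opmx (V : lmodType C) (P Q U X : V -> V) : V * V -> V * V :=
  fun p => (P p.1 + Q p.2, U p.1 + X p.2).

End Defs.

(* Main.v *)
Require Import Defs.
From HB Require Import structures.
From mathcomp Require Import all_boot all_order all_algebra.
From mathcomp Require Import all_classical reals complex.
From mathcomp Require Import ring lra.
Import Order.TTheory GRing.Theory Num.Theory.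
Local Open Scope ring_scope.

Section Bridge.
Variable R : realType.
Local Notation C := (R[i]).
Local Notation rc := (real_complex R).
Local Notation nrm := (@Normc.normc R).

Lemma normE (z : C) : `|z| = rc (nrm z).
Proof. by rewrite normc_def; case: z. Qed.

Lemma nrm_ge0 (z : C) : 0 <= nrm z.
Proof. by rewrite -lecR rmorph0 -normE. Qed.

Lemma nrmM (a b : C) : nrm (a * b) = nrm a * nrm b.
Proof. by apply: complexI; rewrite rmorphM -!normE normrM. Qed.

Lemma nrmD (a b : C) : nrm (a + b) <= nrm a + nrm b.
Proof. by rewrite -lecR rmorphD -!normE ler_normD. Qed.

Lemma nrm_rc (r : R) : nrm (rc r) = `|r|.
Proof. by apply: complexI; rewrite -normE; case: (ger0P r) => h;
  [rewrite !ger0_norm // ler0c|rewrite !ltr0_norm ?rmorphN // ltcR]. Qed.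

Lemma nrm0 : nrm 0 = 0.
Proof. by apply: complexI; rewrite -normE normr0. Qed.

Lemma nrm1 (z : C) : `|z| = 1 -> nrm z = 1.
Proof. by move=> h; apply: complexI; rewrite -normE h. Qed.
End Bridge.
Definition is_form (R : realType) (W : lmodType R[i]) (s : W -> W -> R[i]) :=
  [/\ forall (a : R[i]) x y z, s (a *: x + y) z = a * s x z + s y z,
      forall (a : R[i]) x y z, s x (a *: y + z) = a^* * s x y + s x z &
      forall x, 0 <= s x x].
Arguments is_form {R W}.

Section Form.
Variable R : realType.
Local Notation C := (R[i]).
Local Notation rc := (real_complex R).
Local Notation nrm := (@Normc.normc R).
Variables (W : lmodType C) (s : W -> W -> C).
Hypothesis hs : @is_form R W s.
Let sZDl : forall (a : C) x y z, s (a *: x + y) z = a * s x z + s y z.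
Proof. by case: hs. Qed.
Let sZDr : forall (a : C) x y z, s x (a *: y + z) = a^* * s x y + s x z.
Proof. by case: hs. Qed.
Let s_ge0 : forall x, 0 <= s x x.
Proof. by case: hs. Qed.

Lemma sDl x y z : s (x + y) z = s x z + s y z.
Proof. by rewrite -[x]scale1r sZDl mul1r scale1r. Qed.
Lemma sDr x y z : s x (y + z) = s x y + s x z.
Proof. by rewrite -[y]scale1r sZDr conjC1 mul1r scale1r. Qed.
Lemma s0l z : s 0 z = 0.
Proof. by apply: (@addrI _ (s 0 z)); rewrite addr0 -sDl addr0. Qed.
Lemma s0r z : s z 0 = 0.
Proof. by apply: (@addrI _ (s z 0)); rewrite addr0 -sDr addr0. Qed.
Lemma sZl (a : C) x z : s (a *: x) z = a * s x z.
Proof. by rewrite -[a *: x]addr0 sZDl s0l addr0. Qed.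
Lemma sZr (a : C) x z : s x (a *: z) = a^* * s x z.
Proof. by rewrite -[a *: z]addr0 sZDr s0r addr0. Qed.
Lemma sNl x z : s (- x) z = - s x z.
Proof. by rewrite -scaleN1r sZl mulN1r. Qed.
Lemma sNr x z : s x (- z) = - s x z.
Proof. by rewrite -scaleN1r sZr rmorphN1 mulN1r. Qed.
Lemma sBl x y z : s (x - y) z = s x z - s y z.
Proof. by rewrite sDl sNl. Qed.
Lemma sBr x y z : s x (y - z) = s x y - s x z.
Proof. by rewrite sDr sNr. Qed.

Lemma real_conj (z : C) : 0 <= z -> z^* = z.
Proof. by move=> h; apply: conj_Creal; apply: ger0_real. Qed.

Lemma herm x y : s y x = (s x y)^*.
Proof.
set a := s x y; set b := s y x.
have h1 := real_conj _ (s_ge0 (x + y)).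
have h2 := real_conj _ (s_ge0 (x + 'i *: y)).
have ex := real_conj _ (s_ge0 x); have ey := real_conj _ (s_ge0 y).
rewrite !sDl !sDr !sZl !sZr -/a -/b in h1 h2.
rewrite !rmorphD !rmorphM /= ?conjCK ex ey in h1 h2.
rewrite conjCi in h2.
clearbody a b.
have e1 : a^* + b^* = a + b.
  apply/eqP; rewrite -subr_eq0; apply/eqP.
  transitivity ((s x x + a^* + (b^* + s y y)) - (s x x + a + (b + s y y))); first ring.
  by rewrite h1 subrr.
have e2 : 'i * (a^* + a) = 'i * (b^* + b).
  apply/eqP; rewrite -subr_eq0; apply/eqP.
  transitivity ((s x x + 'i * a^* + (- 'i * b^* + - 'i * ('i * s y y))) - (s x x + - 'i * a + ('i * b + 'i * (- 'i * s y y)))); first ring.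
  by rewrite h2 subrr.
have e3 : a^* + a = b^* + b by apply: (mulfI _ e2); rewrite neq0Ci.
have e4 : b *+ 2 = a^* *+ 2.
  transitivity (((a + b) - (a^* + b^*)) + ((b^* + b) - (a^* + a)) + a^* *+ 2); first ring.
  by rewrite e1 e3 !subrr !add0r.
have h2n : (2%:R : C) != 0 by rewrite pnatr_eq0.
by apply: (mulIf h2n); rewrite !mulr_natr.
Qed.


Definition nq x := complex.Re (s x x).

Lemma nqE x : rc (nq x) = s x x.
Proof. by rewrite /nq RRe_real // ger0_real. Qed.

Lemma nq_ge0 x : 0 <= nq x.
Proof. by rewrite -lecR rmorph0 nqE. Qed.

Lemma CSC x y : `|s x y| *+ 2 <= s x x + s y y.
Proof.
set c := s x y; have [c0|c0] := eqVneq c 0.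
  by rewrite c0 normr0 mul0rn addr_ge0.
set n := `|c|; have n0 : n != 0 by rewrite normr_eq0.
have cc : c^* = n^+2 / c by rewrite /n normCK mulrAC mulfV // mul1r.
have nr : n^* = n := real_conj _ (normr_ge0 _).
rewrite -subr_ge0.
suff -> : s x x + s y y - n *+ 2 = s (x - (c / n) *: y) (x - (c / n) *: y) by [].
rewrite sBl !sBr !sZl !sZr (herm x y) -/c rmorphM /= fmorphV /= nr cc.
by field; rewrite c0 n0.
Qed.

Lemma CSr x y : (nrm (s x y)) *+ 2 <= nq x + nq y.
Proof. by rewrite -lecR rmorphMn rmorphD /= !nqE -normE CSC. Qed.

Lemma nrm_sZZ (a : C) u v : nrm (s (a *: u) (a *: v)) = nrm a ^+ 2 * nrm (s u v).
Proof.
rewrite sZl sZr mulrA -normCK normE -rmorphXn nrmM nrm_rc ger0_norm //.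
by rewrite exprn_ge0 // nrm_ge0.
Qed.

Lemma nqZ (a : C) x : nq (a *: x) = nrm a ^+ 2 * nq x.
Proof.
apply: complexI; rewrite nqE rmorphM rmorphXn /= -normE nqE sZl sZr mulrA.
by rewrite normCK.
Qed.

Lemma sx0 x y : nq y = 0 -> s x y = 0.
Proof.
move=> hy; apply/eqP; apply/negPn/negP => c0.
have np : 0 < nrm (s x y).
  rewrite lt_def nrm_ge0 andbT; apply/negP => /eqP /Normc.eq0_normc h.
  by rewrite h eqxx in c0.
set t := (nq x + 1) / nrm (s x y).
have t0 : 0 <= t by apply: divr_ge0; [apply: addr_ge0; [exact: nq_ge0|exact: ler01]|exact: ltW].
have := CSr x (rc t *: y).
rewrite nqZ hy mulr0 addr0 sZr real_conj ?ler0c // nrmM nrm_rc ger0_norm //.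
rewrite /t mulfVK; last by rewrite gt_eqF.
have := nq_ge0 x; lra.
Qed.

Lemma s0x x y : nq y = 0 -> s y x = 0.
Proof. by move=> h; rewrite herm sx0 // conjC0. Qed.

Lemma unit_iff x : ipnorm s x = 1 <-> nq x = 1.
Proof.
split => h.
  by rewrite -(sqr_sqrtr (nq_ge0 x)); rewrite /ipnorm in h; rewrite -/(nq x) in h; rewrite h expr1n.
by rewrite /ipnorm -/(nq x) h sqrtr1.
Qed.

Lemma normalize x : nq x != 0 -> nq (rc (Num.sqrt (nq x))^-1 *: x) = 1.
Proof.
move=> h; have gt0 : 0 < nq x by rewrite lt_def h nq_ge0.
have r0 : 0 < Num.sqrt (nq x) by rewrite sqrtr_gt0.
have ri : 0 <= (Num.sqrt (nq x))^-1 by rewrite invr_ge0 ltW.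
rewrite nqZ nrm_rc (ger0_norm ri) exprVn sqr_sqrtr ?nq_ge0 //.
by rewrite mulVf.
Qed.

Lemma unit_exists : (exists x, nq x != 0) -> exists y, nq y = 1.
Proof. by case=> x hx; exists (rc (Num.sqrt (nq x))^-1 *: x); apply: normalize. Qed.

Lemma omega_ub (P : W -> W)
  (hb : exists B, forall x, nq x = 1 -> nrm (s (P x) x) <= B)
  (hsc : forall (a : C) x, P (a *: x) = a *: P x) x :
  nrm (s (P x) x) <= omega s P * nq x.
Proof.
have [h0|hpos] := eqVneq (nq x) 0.
  by rewrite h0 mulr0 sx0 // nrm0.
have gt0 : 0 < nq x by rewrite lt_def hpos nq_ge0.
set r := Num.sqrt (nq x).
have r0 : 0 < r by rewrite sqrtr_gt0.
set y := rc r^-1 *: x.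
have ny : nq y = 1 by apply: normalize.
have hy : nrm (s (P y) y) <= omega s P.
  apply: sup_upper_bound; last by exists y => //; apply/unit_iff.
  split; first by exists (nrm (s (P y) y)); exists y => //; apply/unit_iff.
  case: hb => B hB; exists B => z [u hu <-]; apply: hB; exact/unit_iff.
have ri : 0 <= r^-1 by rewrite invr_ge0 ltW.
move: hy; rewrite /y hsc nrm_sZZ nrm_rc (ger0_norm ri) => hy.
have -> : nrm (s (P x) x) = (r^-1 ^+ 2 * nrm (s (P x) x)) * r ^+ 2.
  by field; rewrite gt_eqF.
rewrite /r sqr_sqrtr ?nq_ge0 // ler_wpM2r // ?nq_ge0 //.
Qed.

Lemma omega_le (P : W -> W) (c : R) (hne : exists x, nq x = 1)
  (hc : forall x, nrm (s (P x) x) <= c * nq x) : omega s P <= c.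
Proof.
apply: ge_sup.
  by case: hne => x hx; exists (nrm (s (P x) x)); exists x => //; apply/unit_iff.
move=> _ [x hx <-]; have := hc x; by rewrite (proj1 (unit_iff x) hx) mulr1.
Qed.


Lemma sZZ1 (c : C) x y : c * c^* = 1 -> s (c *: x) (c *: y) = s x y.
Proof. by move=> h; rewrite sZl sZr mulrA h mul1r. Qed.

Lemma nq0 : nq 0 = 0.
Proof. by apply: complexI; rewrite nqE s0l rmorph0. Qed.

Definition bnd (P : W -> W) (B : R) := forall x, nq x = 1 -> nrm (s (P x) x) <= B.

Lemma bnd_op (T : W -> W) l : (forall x, ipnorm s (T x) <= l * ipnorm s x) ->
  bnd T ((l ^+ 2 + 1) / 2).
Proof.
move=> hT x hx; have := hT x; rewrite (proj2 (unit_iff x) hx) mulr1 => h.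
have a0 : 0 <= ipnorm s (T x) by apply: sqrtr_ge0.
have e : nq (T x) = ipnorm s (T x) ^+ 2 by rewrite /ipnorm sqr_sqrtr // nq_ge0.
have := CSr (T x) x; rewrite hx e; nra.
Qed.

Lemma bnd_comb (T S P : W -> W) (d : C) B1 B2 :
  (forall x, P x = T x + d *: S x) -> bnd T B1 -> bnd S B2 -> bnd P (B1 + nrm d * B2).
Proof.
move=> hP h1 h2 x hx; rewrite hP sDl sZl.
apply: (le_trans (nrmD _ _ _)); rewrite nrmM lerD // ?h1 // ler_wpM2l ?nrm_ge0 // h2 //.
Qed.

End Form.
Arguments nq {R W}.
Arguments bnd {R W}.
Arguments sDl {R W s}.
Arguments sDr {R W s}.
Arguments sBl {R W s}.
Arguments sBr {R W s}.
Arguments sNl {R W s}.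
Arguments sNr {R W s}.
Arguments sZl {R W s}.
Arguments sZr {R W s}.
Arguments s0l {R W s}.
Arguments s0r {R W s}.
Arguments nqE {R W s}.
Arguments nq_ge0 {R W s}.
Arguments CSC {R W s}.
Arguments CSr {R W s}.
Arguments sx0 {R W s}.
Arguments s0x {R W s}.
Arguments nqZ {R W s}.
Arguments nrm_sZZ {R W s}.
Arguments herm {R W s}.
Arguments unit_iff {R W s}.
Arguments normalize {R W s}.
Arguments unit_exists {R W s}.
Arguments omega_ub {R W s}.
Arguments omega_le {R W s}.
Arguments nq0 {R W s}.
Arguments sZZ1 {R W s}.
Arguments bnd_op {R W s}.
Arguments bnd_comb {R W s}.

Section Abstract.
Variable R : realType.
Local Notation C := (R[i]).
Local Notation rc := (real_complex R).
Local Notation nrm := (@Normc.normc R).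
Variables (W1 W2 : lmodType C) (s1 : W1 -> W1 -> C) (s2 : W2 -> W2 -> C).
Hypotheses (hs1 : is_form s1) (hs2 : is_form s2).
Variables (P Q : W1 -> W1) (M : W2 -> W2) (phi : W1 -> W1 -> W2).
Hypotheses (hP : exists B, bnd s1 P B) (hQ : exists B, bnd s1 Q B).
Hypothesis hPsc : forall (a : C) x, P (a *: x) = a *: P x.
Hypothesis hQsc : forall (a : C) x, Q (a *: x) = a *: Q x.
Hypothesis hMsc : forall (a : C) x, M (a *: x) = a *: M x.
Hypothesis h1 : forall u v, s2 (M (phi u v)) (phi u v) = 2%:R * (s1 (P u) u + s1 (Q v) v).
Hypothesis h2 : forall u v, s2 (phi u v) (phi u v) = 2%:R * (s1 u u + s1 v v).
Hypothesis h3 : forall x, exists u v, x = phi u v.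
Hypothesis h5 : exists x, nq s1 x = 1.

Lemma nrm2 : nrm (2%:R : C) = 2.
Proof. by rewrite -(rmorph_nat rc) nrm_rc ger0_norm. Qed.

Lemma nq2phi u v : nq s2 (phi u v) = 2 * (nq s1 u + nq s1 v).
Proof.
apply: complexI; rewrite (nqE hs2) h2 rmorphM; congr (_ * _); first by rewrite rmorph_nat.
by rewrite rmorphD /= !(nqE hs1).
Qed.

Theorem abstract_omega : omega s2 M = Num.max (omega s1 P) (omega s1 Q).
Proof.
set m := Num.max (omega s1 P) (omega s1 Q).
have ubP := omega_ub hs1 P hP hPsc.
have ubQ := omega_ub hs1 Q hQ hQsc.
have mP : omega s1 P <= m by rewrite le_max lexx.
have mQ : omega s1 Q <= m by rewrite le_max lexx orbT.
have upper : forall x, nrm (s2 (M x) x) <= m * nq s2 x.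
  move=> x; case: (h3 x) => u [v ->].
  rewrite h1 nq2phi nrmM nrm2.
  have d := nrmD _ (s1 (P u) u) (s1 (Q v) v).
  have a1 := ubP u; have a2 := ubQ v.
  have b1 : omega s1 P * nq s1 u <= m * nq s1 u by rewrite ler_wpM2r // nq_ge0.
  have b2 : omega s1 Q * nq s1 v <= m * nq s1 v by rewrite ler_wpM2r // nq_ge0.
  rewrite mulrCA mulrDr; lra.
have ne2 : exists x, nq s2 x = 1.
  apply: (unit_exists hs2); case: h5 => x hx; exists (phi x 0).
  by rewrite nq2phi hx (nq0 hs1) addr0 mulr1 pnatr_eq0.
have uM : omega s2 M <= m by apply: (omega_le hs2) => //.
have Mb : exists B, bnd s2 M B.
  by exists m => x hx; have := upper x; rewrite hx mulr1.
have ubM := omega_ub hs2 M Mb hMsc.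
have lP : omega s1 P <= omega s2 M.
  apply: (omega_le hs1) => // u.
  have := ubM (phi u 0); rewrite h1 nq2phi (nq0 hs1) (s0r hs1) addr0 addr0 nrmM nrm2.
  rewrite mulrCA; lra.
have lQ : omega s1 Q <= omega s2 M.
  apply: (omega_le hs1) => // v.
  have := ubM (phi 0 v); rewrite h1 nq2phi (nq0 hs1) (s0r hs1) add0r add0r nrmM nrm2.
  rewrite mulrCA; lra.
by apply/eqP; rewrite eq_le uM /m ge_max lP lQ.
Qed.
End Abstract.

Section Concrete.
Variable R : realType.
Local Notation C := (R[i]).
Variables (V : lmodType C) (ip : V -> V -> C).
Hypothesis hip : is_inner_product ip.
Variable A : {linear V -> V}.
Hypothesis hApos : positive_op ip A.

Lemma ipA_form : is_form (ipA ip A).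
Proof.
case: hip => hl hsym _ _; split.
- by move=> a x y z; rewrite /ipA linearP hl.
- by move=> a x y z; rewrite /ipA [LHS]hsym hl rmorphD rmorphM /= -!hsym.
- by move=> x; case: hApos => _ h; exact: h.
Qed.

Lemma ipAA_form : is_form (ipAA ip A : V * V -> V * V -> C).
Proof.
case: ipA_form => l1 r1 p1; split.
- by move=> a x y z; rewrite /ipAA /= !l1; ring.
- by move=> a x y z; rewrite /ipAA /= !r1; ring.
- by move=> x; rewrite /ipAA addr_ge0.
Qed.

Lemma half1 (a b : V) : 2%:R^-1 *: (a + b) + 2%:R^-1 *: (a - b) = a.
Proof.
have h2 : (2%:R : C) != 0 by rewrite pnatr_eq0.
have e : a + a = 2%:R *: a by rewrite scaler_nat mulr2n.
by rewrite -scalerDr addrACA subrr addr0 e scalerA mulVf // scale1r.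
Qed.

Lemma half2 (a b : V) : 2%:R^-1 *: (a + b) - 2%:R^-1 *: (a - b) = b.
Proof.
have h2 : (2%:R : C) != 0 by rewrite pnatr_eq0.
have e : b + b = 2%:R *: b by rewrite scaler_nat mulr2n.
by rewrite -scalerBr [a + b]addrC addrKA opprK e scalerA mulVf // scale1r.
Qed.

End Concrete.

Theorem lemma2p5 (R : realType) (V : lmodType R[i]) (ip : V -> V -> R[i])
  (hip : is_inner_product ip) (hcomplete : ip_complete ip)
  (A : {linear V -> V}) (hApos : positive_op ip A) (hA0 : exists x, A x != 0)
  (T S : {linear V -> V})
  (hT : in_BA12 ip A T) (hS : in_BA12 ip A S) :
  omega (ipAA ip A) (opmx T S S T)
    = Num.max (omega (ipA ip A) (fun x => T x + S x))
              (omega (ipA ip A) (fun x => T x - S x))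
  /\
  omega (ipAA ip A) (opmx T (fun x => - S x) S T)
    = Num.max (omega (ipA ip A) (fun x => T x + 'i *: S x))
              (omega (ipA ip A) (fun x => T x - 'i *: S x)).
Proof.
have hs1 := @ipA_form R V ip hip A hApos.
have hs2 := @ipAA_form R V ip hip A hApos.
case: hT => lT _ hTb; case: hS => lS _ hSb.
have bT := bnd_op hs1 T lT hTb.
have bS := bnd_op hs1 S lS hSb.
have bc : forall (d : R[i]) (P : V -> V), (forall x, P x = T x + d *: S x) ->
    exists B, bnd (ipA ip A) P B.
  by move=> d P hP; eexists; apply: (bnd_comb hs1 T S P d _ _ hP bT bS).
have h5 : exists x, nq (ipA ip A) x = 1.
  apply: (unit_exists hs1); case: hA0 => x hx; exists (A x).
  apply/negP => /eqP h0; have := sx0 hs1 x (A x) h0; rewrite /ipA.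
  case: hip => _ _ _ hd /hd h; by rewrite h eqxx in hx.
have cc : (- 'i : R[i]) * (- 'i)^* = 1.
  by rewrite rmorphN /= conjCi opprK mulNr -expr2 sqrCi opprK.
split.
- apply: (@abstract_omega R V [the lmodType R[i] of (V * V)%type] (ipA ip A) (ipAA ip A) hs1 hs2
    (fun x => T x + S x) (fun x => T x - S x) (opmx T S S T)
    (fun u v => (u + v, u - v))) => //.
  + by apply: (bc 1) => x; rewrite scale1r.
  + by apply: (bc (-1)) => x; rewrite scaleN1r.
  + by move=> a x /=; rewrite !linearZ /= scalerDr.
  + by move=> a x /=; rewrite !linearZ /= scalerBr scalerN.
  + by move=> a [x1 x2]; rewrite /opmx /= !linearZ /= -!scalerDr.
  + move=> u v; rewrite /ipAA /opmx /= !linearB !linearD /=.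
    rewrite ?(sDl hs1) ?(sBl hs1) ?(sDr hs1) ?(sBr hs1) ?(sNl hs1) ?(sNr hs1); ring.
  + move=> u v; rewrite /ipAA /=.
    rewrite ?(sDl hs1) ?(sBl hs1) ?(sDr hs1) ?(sBr hs1) ?(sNl hs1) ?(sNr hs1); ring.
  + move=> [x1 x2]; exists (2%:R^-1 *: (x1 + x2)), (2%:R^-1 *: (x1 - x2)).
    by rewrite half1 half2.
- apply: (@abstract_omega R V [the lmodType R[i] of (V * V)%type] (ipA ip A) (ipAA ip A) hs1 hs2
    (fun x => T x + 'i *: S x) (fun x => T x - 'i *: S x) (opmx T (fun x => - S x) S T)
    (fun u v => (u + v, (- 'i) *: u - (- 'i) *: v))) => //.
  + by apply: (bc 'i) => x.
  + by apply: (bc (- 'i)) => x; rewrite scaleNr.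
  + by move=> a x /=; rewrite !linearZ /= scalerDr !scalerA mulrC.
  + by move=> a x /=; rewrite !linearZ /= scalerDr !scalerA mulrC.
  + by move=> a [x1 x2]; rewrite /opmx /= !linearZ /= -!scalerDr.
  + move=> u v; rewrite /ipAA /opmx /= !linearB !linearD !linearZ /=.
    rewrite ?(sDl hs1) ?(sBl hs1) ?(sNl hs1) ?(sDr hs1) ?(sBr hs1) ?(sNl hs1) ?(sNr hs1).
    rewrite !(sZZ1 hs1 _ _ _ cc) ?(sZl hs1) ?(sZr hs1) rmorphN /= conjCi opprK ?(sNl hs1) ?(sNr hs1); ring.
  + move=> u v; rewrite /ipAA /=.
    rewrite ?(sDl hs1) ?(sBl hs1) ?(sDr hs1) ?(sBr hs1) ?(sNl hs1) ?(sNr hs1) !(sZZ1 hs1 _ _ _ cc); ring.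
  + move=> [x1 x2]; exists (2%:R^-1 *: (x1 + 'i *: x2)), (2%:R^-1 *: (x1 - 'i *: x2)).
    rewrite half1 -scalerBr half2 scalerA mulNr -expr2 sqrCi opprK scale1r //.
Qed.
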